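(* Let $X$ be a set and let $w$ be a word on $X^{\pm1}$ with two decompositions $$w\equiv a_1w_1^{m_1}b_1\equiv a_2w_2^{m_2}b_2,$$ where $m_i\ge2$ and $w_i,a_i,b_i$ are words for $i=1,2$. Suppose that $w_1,w_2$ are primitive and that there are non-negative real constants $A,B$ such that $|a_i|\le A$, $|b_i|\le B$ and $|w|-(A+B)\ge 2|w_i|$ for $i=1,2$. Then $w_1$ and $w_2$ are cyclically conjugate words. Furthermore, regarding words as elements of the free group on $X$, $a_1w_1a_1^{-1}=a_2w_2a_2^{-1}$ and $b_1^{-1}w_1b_1=b_2^{-1}w_2b_2$.
   Context: Words are finite sequences of letters from $X^{\pm1}$; $\equiv$ is letterwise equality; $|w|$ is the number of letters of $w$. A nonempty word is primitive if it is not $u^k$ (as a word) for any word $u$ and $k\ge2$. A cyclic conjugate of a word $w\equiv u_1u_2$ is the word $u_2u_1$. *)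

(* Defs.v *)
From HB Require Import structures.
From mathcomp Require Import all_boot all_order all_algebra.
Set Implicit Arguments. Unset Strict Implicit. Unset Printing Implicit Defensive.

(* Letters of X^{+-1}: a pair (x, e) with e = true meaning x^{+1}
   and e = false meaning x^{-1}.  Words are finite sequences of letters;
   letterwise equality is Leibniz equality of sequences. *)
Definition letter (X : Type) := (X * bool)%type.
Definition word (X : Type) := seq (letter X).

Definition linv (X : Type) (l : letter X) : letter X := (l.1, ~~ l.2).

Definition winv (X : Type) (w : word X) : word X := rev (map (@linv X) w).

Definition wpow (X : Type) (u : word X) (k : nat) : word X := flatten (nseq k u).

Definition primitive (X : Type) (w : word X) : Prop :=
  w <> [::] /\ ~ (exists (u : word X) (k : nat), 2 <= k /\ w = wpow u k).

Definition cyclic_conj (X : Type) (w v : word X) : Prop :=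
  exists u1 u2 : word X, w = u1 ++ u2 /\ v = u2 ++ u1.

(* Equality of the images in the free group F(X): the equivalence relation
   generated by inserting/deleting a cancelling pair l l^{-1}. *)
Inductive free_eq (X : Type) : word X -> word X -> Prop :=
  | free_eq_refl w : free_eq w w
  | free_eq_cancel p q l : free_eq (p ++ [:: l; linv l] ++ q) (p ++ q)
  | free_eq_sym u v : free_eq u v -> free_eq v u
  | free_eq_trans u v t : free_eq u v -> free_eq v t -> free_eq u t.

(* Main.v *)
Require Import Defs.
From HB Require Import structures.
From mathcomp Require Import all_boot all_order all_algebra.
From mathcomp Require Import zify ring lra.
Import Order.TTheory GRing.Theory Num.Theory.

Section W.
Variable X : Type.
Implicit Types (u v x y z : word X).

Lemma winv_cat x y : winv (x ++ y) = winv y ++ winv x.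
Proof. by rewrite /winv map_cat rev_cat. Qed.

Lemma winvK x : winv (winv x) = x.
Proof.
rewrite /winv map_rev revK -map_comp -[RHS]map_id; apply: eq_map => -[a b] /=.
by rewrite /linv /= negbK.
Qed.

Lemma size_winv x : size (winv x) = size x.
Proof. by rewrite /winv size_rev size_map. Qed.

Lemma wpowS u m : wpow u m.+1 = u ++ wpow u m.
Proof. by []. Qed.

Lemma wpowD u a b : wpow u (a + b) = wpow u a ++ wpow u b.
Proof. by elim: a => [|a IH] //=; rewrite addSn !wpowS IH catA. Qed.

Lemma wpowSr u m : wpow u m.+1 = wpow u m ++ u.
Proof. by rewrite -addn1 wpowD /wpow /= cats0. Qed.

Lemma size_wpow u m : size (wpow u m) = m * size u.
Proof. by elim: m => [|m IH] //; rewrite wpowS size_cat IH mulSn. Qed.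

Lemma winv_wpow u m : winv (wpow u m) = wpow (winv u) m.
Proof. by elim: m => [|m IH] //; rewrite wpowS winv_cat IH -wpowSr. Qed.

Lemma nth_wpow (x0 : letter X) u m i : i < m * size u ->
  nth x0 (wpow u m) i = nth x0 u (i %% size u).
Proof.
elim: m i => [|m IH] i; first by rewrite mul0n.
rewrite wpowS nth_cat mulSn => Hi.
case: ltnP => H; first by rewrite modn_small.
rewrite IH; last by lia.
by rewrite -{2}(subnK H) modnDr.
Qed.

Lemma primitive_winv u : primitive u -> primitive (winv u).
Proof.
move=> [Hne Hnp]; split.
  by move=> E; apply: Hne; rewrite -(winvK u) E.
move=> [v [k [Hk E]]]; apply: Hnp; exists (winv v), k; split => //.
by rewrite -winv_wpow -E winvK.
Qed.

Lemma free_eq_winv u v : free_eq u v -> free_eq (winv u) (winv v).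
Proof.
elim=> {u v}.
- by move=> ?; apply: free_eq_refl.
- move=> p q l; rewrite !winv_cat.
  have -> : winv [:: l; linv l] = [:: l; linv l].
    by rewrite /winv /= /linv /= negbK; case: l.
  by rewrite -catA; apply: free_eq_cancel.
- by move=> ? ? _ H; apply: free_eq_sym.
- by move=> ? ? ? _ H1 _ H2; apply: free_eq_trans H1 H2.
Qed.

Lemma cancel_mid x y z : free_eq (x ++ y ++ winv y ++ z) (x ++ z).
Proof.
elim: y x z => [|l y IH] x z /=; first by apply: free_eq_refl.
have -> : winv (l :: y) = winv y ++ [:: linv l].
  by rewrite -cat1s winv_cat.
have E : x ++ l :: y ++ (winv y ++ [:: linv l]) ++ z =
  rcons x l ++ y ++ winv y ++ ([:: linv l] ++ z) by rewrite -cats1 -!catA.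
rewrite E; apply: free_eq_trans (IH _ _) _.
rewrite -cats1 -catA; exact: free_eq_cancel.
Qed.

End W.
Arguments primitive_winv [X u].
Arguments free_eq_winv [X u v].
Arguments cancel_mid [X].

Section FW.
Variable T : Type.
Implicit Types h : nat -> T.

Lemma per_mul h p : (forall i, h (i + p) = h i) -> forall i k, h (i + k * p) = h i.
Proof.
move=> P i k; elim: k => [|k IH]; first by rewrite addn0.
by rewrite mulSn addnA addnC addnA [_ + i]addnC P.
Qed.

Lemma per_mod h p : (forall i, h (i + p) = h i) -> forall i, h i = h (i %% p).
Proof. by move=> P i; rewrite {1}(divn_eq i p) addnC (per_mul _ _ P). Qed.
End FW.
Arguments per_mul [T h p].
Arguments per_mod [T h p].
Section FW2.
Variable T : Type.
Implicit Types h : nat -> T.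

Lemma fw h1 h2 p q : 0 < p -> 0 < q ->
  (forall i, h1 (i + p) = h1 i) -> (forall i, h2 (i + q) = h2 i) ->
  (forall i, i < p + q -> h1 i = h2 i) ->
  (forall i, h1 i = h2 i) /\ (forall i, h1 (i + gcdn p q) = h1 i).
Proof.
move=> p0 q0 P1 P2 E.
have P1q : forall i, h1 (i + q) = h1 i.
  move=> i.
  have -> : i + q = (i %% p + q) + (i %/ p) * p by rewrite {1}(divn_eq i p); lia.
  rewrite (per_mul P1) (E (i %% p + q)); last by rewrite ltn_add2r ltn_pmod.
  rewrite P2 -(E (i %% p)); last first.
    by apply: leq_trans (ltn_pmod _ p0) (leq_addr _ _).
  by rewrite -per_mod.
split.
  move=> i; rewrite (per_mod P1q) (per_mod P2 i) E //.
  by apply: leq_trans (ltn_pmod _ q0) (leq_addl _ _).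
move=> i; case: (Bezoutl p q0) => a _ /dvdnP [k Hk].
rewrite -(per_mul P1 (i + gcdn p q) a) -addnA gcdnC Hk.
exact: per_mul.
Qed.
End FW2.
Arguments fw [T h1 h2 p q].

Lemma prim_period (X : Type) (x0 : letter X) (u : word X) g :
  primitive u -> 0 < g -> g %| size u ->
  (forall i, i + g < size u -> nth x0 u i = nth x0 u (i + g)) -> g = size u.
Proof.
move=> [Hne Hnp] g0 gd Hp.
have n0 : 0 < size u by destruct u.
have gle : g <= size u by apply: dvdn_leq.
have Hm : forall n i, i <= n -> i < size u -> nth x0 u i = nth x0 u (i %% g).
  elim=> [|n IH] i Hi Hu; first by move: Hi; rewrite leqn0 => /eqP ->; rewrite mod0n.
  case: (ltnP i g) => H; first by rewrite modn_small.
  rewrite -(subnK H) -Hp; last by rewrite subnK.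
  rewrite modnDr IH //; lia.
case: (ltngtP g (size u)) => H //; last by rewrite ltnNge gle in H.
exfalso; apply: Hnp; exists (take g u), (size u %/ g); split.
  have := divnK gd; nia.
apply: (@eq_from_nth _ x0).
  by rewrite size_wpow size_take_min (minn_idPl gle) divnK.
move=> i Hi; rewrite nth_wpow; last first.
  by rewrite size_take_min (minn_idPl gle) divnK.
rewrite size_take_min (minn_idPl gle) nth_take ?ltn_pmod //.
exact: (Hm i).
Qed.
Arguments prim_period [X] x0 [u g].

Lemma core_le (X : Type) (w a1 w1 b1 a2 w2 b2 : word X) (m1 m2 A B : nat) :
  w = a1 ++ wpow w1 m1 ++ b1 -> w = a2 ++ wpow w2 m2 ++ b2 ->
  primitive w1 -> primitive w2 ->
  size a1 <= A -> size a2 <= A -> size b1 <= B -> size b2 <= B ->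
  A + B + 2 * size w1 <= size w -> A + B + 2 * size w2 <= size w ->
  size a2 <= size a1 ->
  cyclic_conj w1 w2 /\ free_eq (a1 ++ w1 ++ winv a1) (a2 ++ w2 ++ winv a2).
Proof.
move=> Ew1 Ew2 Pr1 Pr2 Ha1 Ha2 Hb1 Hb2 Hn1 Hn2 Hle.
have [x0 _] : exists x : letter X, True.
  by destruct w1 as [|x s]; [case: Pr1 | exists x].
have p0 : 0 < size w1 by case: Pr1 => ne _; destruct w1.
have q0 : 0 < size w2 by case: Pr2 => ne _; destruct w2.
have Sw1 : size w = size a1 + m1 * size w1 + size b1.
  by rewrite Ew1 !size_cat size_wpow addnA.
have Sw2 : size w = size a2 + m2 * size w2 + size b2.
  by rewrite Ew2 !size_cat size_wpow addnA.
set p := size w1 in p0 Sw1 Hn1 *.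
set q := size w2 in q0 Sw2 Hn2 *.
set o := size a1 - size a2.
have N1 : forall i, i < m1 * p -> nth x0 w (size a1 + i) = nth x0 w1 (i %% p).
  move=> i Hi; rewrite Ew1 nth_cat ltnNge leq_addr /= addKn nth_cat size_wpow Hi.
  by rewrite nth_wpow.
have N2 : forall i, i < m2 * q -> nth x0 w (size a2 + i) = nth x0 w2 (i %% q).
  move=> i Hi; rewrite Ew2 nth_cat ltnNge leq_addr /= addKn nth_cat size_wpow Hi.
  by rewrite nth_wpow.
pose h1 i := nth x0 w1 (i %% p).
pose h2 i := nth x0 w2 ((o + i) %% q).
have Ag : forall i, i < p + q -> h1 i = h2 i.
  move=> i Hi; rewrite /h1 /h2 -N1; last by nia.
  rewrite -N2; last by nia.
  congr nth; rewrite /o; lia.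
have P1 : forall i, h1 (i + p) = h1 i by move=> i; rewrite /h1 modnDr.
have P2 : forall i, h2 (i + q) = h2 i by move=> i; rewrite /h2 addnA modnDr.
have [E G1] := fw p0 q0 P1 P2 Ag.
have g0 : 0 < gcdn p q by rewrite gcdn_gt0 p0.
have gp : gcdn p q = p.
  apply: (prim_period x0 Pr1 g0 (dvdn_gcdl _ _)) => i Hi.
  have := G1 i; rewrite /h1 !modn_small //; lia.
have gq : gcdn p q = q.
  have Hh : forall j, nth x0 w2 (j %% q) = h2 (j + q.-1 * o).
    move=> j; rewrite /h2; congr nth.
    have -> : o + (j + q.-1 * o) = o * q + j by nia.
    by rewrite modnMDl.
  apply: (prim_period x0 Pr2 g0 (dvdn_gcdr _ _)) => i Hi.
  have e1 : i = i %% q by rewrite modn_small //; lia.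
  have e2 : i + gcdn p q = (i + gcdn p q) %% q by rewrite modn_small.
  rewrite {1}e1 e2.
  rewrite !Hh -E -G1 E; congr h2; lia.
have pq : q = p by rewrite -gq gp.
have Hq : size w2 = q by [].
clearbody q; subst q.
set r := o %% p.
have r_lt : r < p by rewrite ltn_pmod.
have Ew : w1 = drop r w2 ++ take r w2.
  apply: (@eq_from_nth _ x0).
    by rewrite size_cat size_drop size_take_min Hq; lia.
  move=> i Hi.
  have := E i; rewrite /h1 /h2 (modn_small Hi) => ->.
  rewrite -modnDml -/r nth_cat size_drop Hq.
  case: ltnP => H.
    rewrite nth_drop modn_small //; lia.
  rewrite nth_take; last by lia.
  congr nth; have -> : r + i = (r + i - p) + p by lia.
  rewrite modnDr modn_small //; lia.
split.
  exists (drop r w2), (take r w2); split => //; by rewrite cat_take_drop.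
have Ea1 : a1 = a2 ++ take o (wpow w2 m2).
  have E1 : take (size a1) w = a1 by rewrite Ew1 take_size_cat.
  rewrite -E1 Ew2 (_ : size a1 = size a2 + o); last by rewrite /o; lia.
  rewrite take_cat ltnNge leq_addr /= addKn takel_cat // size_wpow Hq; nia.
set k := o %/ p.
have ko : o = k * p + r by exact: divn_eq.
have km : k < m2 by rewrite /k ltn_divLR //; nia.
have Em : wpow w2 m2 = wpow w2 k ++ w2 ++ wpow w2 (m2 - k.+1).
  by rewrite -wpowS -wpowD; congr wpow; lia.
have Et : take o (wpow w2 m2) = wpow w2 k ++ take r w2.
  rewrite Em ko take_cat size_wpow Hq ltnNge leq_addr /= addKn takel_cat // Hq; lia.
rewrite Ea1 Et Ew.
have C : wpow w2 k ++ w2 = w2 ++ wpow w2 k by rewrite -wpowS wpowSr.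
set W := wpow w2 k in C *; set t := take r w2; set d := drop r w2.
have Ew2' : w2 = t ++ d by rewrite cat_take_drop.
rewrite !winv_cat -!catA.
have := cancel_mid (a2 ++ W ++ t ++ d) t (winv W ++ winv a2).
rewrite -!catA => H; apply: free_eq_trans H _.
rewrite (catA t d) -Ew2' (catA W w2) C -catA.
have := cancel_mid (a2 ++ w2) W (winv a2).
by rewrite -!catA.
Qed.
Arguments core_le [X w a1 w1 b1 a2 w2 b2 m1 m2 A B].

Lemma core (X : Type) (w a1 w1 b1 a2 w2 b2 : word X) (m1 m2 A B : nat) :
  w = a1 ++ wpow w1 m1 ++ b1 -> w = a2 ++ wpow w2 m2 ++ b2 ->
  primitive w1 -> primitive w2 ->
  size a1 <= A -> size a2 <= A -> size b1 <= B -> size b2 <= B ->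
  A + B + 2 * size w1 <= size w -> A + B + 2 * size w2 <= size w ->
  cyclic_conj w1 w2 /\ free_eq (a1 ++ w1 ++ winv a1) (a2 ++ w2 ++ winv a2).
Proof.
move=> Ew1 Ew2 Pr1 Pr2 Ha1 Ha2 Hb1 Hb2 Hn1 Hn2.
case: (leqP (size a2) (size a1)) => H; first exact: (core_le Ew1 Ew2 Pr1 Pr2 Ha1 Ha2 Hb1 Hb2 Hn1 Hn2 H).
have [[u1 [u2 [e1 e2]]] F] := core_le Ew2 Ew1 Pr2 Pr1 Ha2 Ha1 Hb2 Hb1 Hn2 Hn1 (ltnW H).
split; last exact: free_eq_sym.
by exists u2, u1.
Qed.
Arguments core [X w a1 w1 b1 a2 w2 b2 m1 m2 A B].

Local Open Scope ring_scope.

Theorem proposition3p3 (X : Type) (R : realFieldType) (A B : R)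
    (w a1 w1 b1 a2 w2 b2 : word X) (m1 m2 : nat) :
  (2 <= m1)%N -> (2 <= m2)%N ->
  w = a1 ++ wpow w1 m1 ++ b1 ->
  w = a2 ++ wpow w2 m2 ++ b2 ->
  primitive w1 -> primitive w2 ->
  0 <= A -> 0 <= B ->
  (size a1)%:R <= A -> (size a2)%:R <= A ->
  (size b1)%:R <= B -> (size b2)%:R <= B ->
  (size w)%:R - (A + B) >= 2 * (size w1)%:R ->
  (size w)%:R - (A + B) >= 2 * (size w2)%:R ->
  [/\ cyclic_conj w1 w2,
      free_eq (a1 ++ w1 ++ winv a1) (a2 ++ w2 ++ winv a2)
    & free_eq (winv b1 ++ w1 ++ b1) (winv b2 ++ w2 ++ b2)].
Proof.
move=> _ _ Ew1 Ew2 Pr1 Pr2 _ _ Ha1 Ha2 Hb1 Hb2 Hn1 Hn2.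
set A' := maxn (size a1) (size a2).
set B' := maxn (size b1) (size b2).
have HA : A'%:R <= A.
  by rewrite /A'; case: (leqP (size a1) (size a2)).
have HB : B'%:R <= B.
  by rewrite /B'; case: (leqP (size b1) (size b2)).
have K : forall u : word X, 2 * (size u)%:R <= (size w)%:R - (A + B) ->
    (A' + B' + 2 * size u <= size w)%N.
  move=> u Hu; rewrite -(ler_nat R) !natrD.
  move: Hu; rewrite addr0; lra.
have Hn1' := K _ Hn1; have Hn2' := K _ Hn2.
have la1 : (size a1 <= A')%N by apply: leq_maxl.
have la2 : (size a2 <= A')%N by apply: leq_maxr.
have lb1 : (size b1 <= B')%N by apply: leq_maxl.
have lb2 : (size b2 <= B')%N by apply: leq_maxr.
have [C F] := core Ew1 Ew2 Pr1 Pr2 la1 la2 lb1 lb2 Hn1' Hn2'.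
split => //.
have Ei : forall a u b m, w = a ++ wpow u m ++ b ->
    winv w = winv b ++ wpow (winv u) m ++ winv a.
  by move=> a u b m ->; rewrite !winv_cat winv_wpow catA.
have lb1' : (size (winv b1) <= B')%N by rewrite size_winv.
have lb2' : (size (winv b2) <= B')%N by rewrite size_winv.
have la1' : (size (winv a1) <= A')%N by rewrite size_winv.
have la2' : (size (winv a2) <= A')%N by rewrite size_winv.
have Hm1 : (B' + A' + 2 * size (winv w1) <= size (winv w))%N.
  by rewrite !size_winv (addnC B').
have Hm2 : (B' + A' + 2 * size (winv w2) <= size (winv w))%N.
  by rewrite !size_winv (addnC B').
have [_ F'] := core (Ei _ _ _ _ Ew1) (Ei _ _ _ _ Ew2)
  (primitive_winv Pr1) (primitive_winv Pr2) lb1' lb2' la1' la2' Hm1 Hm2.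
have := free_eq_winv F'.
by rewrite !winv_cat !winvK -!catA.
Qed.
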